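(* Let $u,v$ be monomials with $\mu(u)\cap\mu(v)=\emptyset$ and $p_{ij}p_{ji}=1$ for all $x_i\in\mu(u)$, $x_j\in\mu(v)$. Then the following are equivalent: (i) $u\neq0$ and $v\neq0$ in $\mathfrak{B}(V)$; (ii) $uv\neq0$; (iii) $uv\notin\mathfrak{L}(V)$.
   Context: $V$ is a braided vector space of diagonal type over an algebraically closed field $F$ of characteristic $0$ with basis $x_1,\dots,x_n$, braiding $C(x_i\otimes x_j)=q_{ij}x_j\otimes x_i$, Nichols algebra $\mathfrak{B}(V)$ ($\mathbb{Z}^n$-graded, $\deg x_i=e_i$); $\chi(e_i,e_j)=q_{ij}$, $p_{ij}:=q_{ij}$, $p_{uv}:=\chi(\deg u,\deg v)$. For homogeneous $x,y$, $[x,y]:=yx-p_{yx}xy$; $\mathfrak{L}(V)$ is the linear span of all iterated brackets (any bracketing) of $x_1,\dots,x_n$. A monomial is a nonempty word in $x_1,\dots,x_n$ viewed in $\mathfrak{B}(V)$, and $\mu(u)$ is its set of letters. *)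

(* Defs.v *)
(* Nichols algebra of diagonal type, modelled concretely:
   T(V) elements are finite formal sums (lists of (coefficient, word)),
   and B(V) = T(V)/ker(Omega), Omega the quantum symmetrizer. *)
From HB Require Import structures.
From mathcomp Require Import all_boot all_order all_algebra all_fingroup.
Set Implicit Arguments. Unset Strict Implicit. Unset Printing Implicit Defensive.
Import GRing.Theory.
Local Open Scope ring_scope.

Section Nichols.
Variables (F : fieldType) (n : nat) (q : 'I_n -> 'I_n -> F).

Definition word := seq 'I_n.
Definition tens := seq (F * word).

Definition tcoef (t : tens) (w : word) : F := \sum_(p <- t | p.2 == w) p.1.
Definition tzero (t : tens) : Prop := forall w, tcoef t w = 0.

Definition tadd (t1 t2 : tens) : tens := t1 ++ t2.
Definition tscale (c : F) (t : tens) : tens := [seq (c * p.1, p.2) | p <- t].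
Definition tmul (t1 t2 : tens) : tens :=
  [seq (a.1 * b.1, a.2 ++ b.2) | a <- t1, b <- t2].
Definition tword (w : word) : tens := [:: (1, w)].

(* Matsumoto lift T_s of s in S_m acting on x_{w_0} ... x_{w_{m-1}}:
   letter w_a moves to position s a; each inverted pair a<b, s b < s a
   contributes q_{w_a w_b}. *)
Definition perm_coef (w : word) (s : 'S_(size w)) : F :=
  \prod_(a : 'I_(size w)) \prod_(b : 'I_(size w) | (a < b)%N && (s b < s a)%N)
     q (tnth (in_tuple w) a) (tnth (in_tuple w) b).
Definition perm_word (w : word) (s : 'S_(size w)) : word :=
  [seq tnth (in_tuple w) ((s^-1)%g k) | k <- enum 'I_(size w)].

Definition symm_word (w : word) : tens :=
  [seq (perm_coef s, perm_word s) | s <- enum [set: 'S_(size w)]].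
Definition symm (t : tens) : tens :=
  flatten [seq tscale p.1 (symm_word p.2) | p <- t].

Definition nichols_zero (t : tens) : Prop := tzero (symm t).

(* chi(deg s1, deg s2) for the multisets of letters s1, s2 *)
Definition chi (s1 s2 : word) : F := \prod_(a <- s1) \prod_(b <- s2) q a b.

Inductive btree := BLeaf of 'I_n | BNode of btree & btree.
Fixpoint bletters (t : btree) : word :=
  match t with BLeaf i => [:: i] | BNode x y => bletters x ++ bletters y end.
(* [x,y] = y x - p_{yx} x y *)
Fixpoint beval (t : btree) : tens :=
  match t with
  | BLeaf i => tword [:: i]
  | BNode x y => tadd (tmul (beval y) (beval x))
                      (tscale (- chi (bletters y) (bletters x))
                              (tmul (beval x) (beval y)))
  end.

(* the class of t in B(V) lies in L(V) = span of iterated brackets *)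
Definition in_L (t : tens) : Prop :=
  exists cs : seq (F * btree),
    nichols_zero (tadd t (flatten [seq tscale (- c.1) (beval c.2) | c <- cs])).

End Nichols.

(* Main.v *)
Require Import Defs.
From HB Require Import structures.
From mathcomp Require Import all_boot all_order all_algebra all_fingroup.
From mathcomp Require Import zify ring.
From Stdlib Require Import Classical.
Set Implicit Arguments. Unset Strict Implicit. Unset Printing Implicit Defensive.
Import GRing.Theory.
Local Open Scope ring_scope.

Section Dev.
Variables (F : fieldType) (n : nat) (q : 'I_n -> 'I_n -> F).

Lemma perm_word_size (w : word n) (s : 'S_(size w)) : size (perm_word s) = size w.
Proof. by rewrite size_map size_enum_ord. Qed.

Lemma perm_word_nth (w : word n) (s : 'S_(size w)) x0 (j : 'I_(size w)) :
  nth x0 (perm_word s) j = nth x0 w ((s^-1)%g j).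
Proof.
rewrite /perm_word (nth_map j) ?size_enum_ord //.
by rewrite nth_ord_enum (tnth_nth x0).
Qed.

Definition insert_at k (a : 'I_n) (l : word n) := take k l ++ a :: drop k l.

Lemma size_insert_at k a (l : word n) : (k <= size l)%N -> size (insert_at k a l) = (size l).+1.
Proof.
move=> hk; rewrite /insert_at size_cat /= size_take size_drop.
case: ltnP => h; first by rewrite addnS subnKC // ltnW.
have -> : k = size l by apply/eqP; rewrite eqn_leq hk h.
by rewrite subnn addn1.
Qed.

Lemma perm_word_lift (a : 'I_n) (w : word n) (k : 'I_(size w).+1) (s : 'S_(size w)) :
  @perm_word n (a :: w) (lift_perm ord0 k s) = insert_at k a (perm_word s).
Proof.
have hk : (k <= size (perm_word s))%N by rewrite perm_word_size -ltnS.
apply: (@eq_from_nth _ a).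
  by rewrite perm_word_size size_insert_at // perm_word_size.
move=> j; rewrite perm_word_size /= => lj.
have -> : j = Ordinal (lj : (j < size (a :: w))%N) by [].
rewrite perm_word_nth lift_permV /insert_at.
case: (unliftP k (Ordinal lj)) => [j0|] ej.
  rewrite ej lift_perm_lift /=.
  rewrite add0n.
  rewrite -[X in nth _ w X]/(nat_of_ord ((s^-1)%g j0)) -perm_word_nth.
  rewrite nth_cat size_take_min (minn_idPl hk).
  rewrite /bump; case: (ltnP j0 k) => hj0.
    by rewrite add0n hj0 nth_take.
  have -> : (true + j0 = j0.+1)%N by []. rewrite ltnNge (leqW hj0) /= subSn //.
  by rewrite /= nth_drop subnKC.
rewrite ej lift_perm_id /=.
by rewrite nth_cat size_take_min (minn_idPl hk) ltnn subnn.
Qed.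

Lemma lift_ltn m (k : 'I_m.+1) (x y : 'I_m) : (lift k x < lift k y)%N = (x < y)%N.
Proof. rewrite /= /bump; case: (leqP k x); case: (leqP k y) => /= ? ?; lia. Qed.

Lemma lift_ltk m (k : 'I_m.+1) (x : 'I_m) : (lift k x < k)%N = (x < k)%N.
Proof. rewrite /= /bump; case: (leqP k x) => /= ?; lia. Qed.

Lemma prod_ord_recl_cond m (P : pred 'I_m.+1) (G : 'I_m.+1 -> F) :
  \prod_(b | P b) G b = (if P ord0 then G ord0 else 1) * \prod_(b : 'I_m | P (lift ord0 b)) G (lift ord0 b).
Proof. by rewrite big_mkcond big_ord_recl /= -big_mkcond. Qed.

Lemma prod_take (g : 'I_n -> F) (L : word n) k x0 :
  \prod_(x <- take k L) g x = \prod_(j < size L | (j < k)%N) g (nth x0 L j).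
Proof.
elim: L k => [|c L IH] k /=; first by rewrite big_nil big_ord0.
case: k => [|k].
  by rewrite take0 big_nil big1.
rewrite big_cons prod_ord_recl_cond /= IH.
by congr (_ * _).
Qed.

Lemma perm_coef_lift (a : 'I_n) (w : word n) (k : 'I_(size w).+1) (s : 'S_(size w)) :
  @perm_coef F n q (a :: w) (lift_perm ord0 k s) =
  \prod_(x <- take k (perm_word s)) q a x * perm_coef q s.
Proof.
rewrite /perm_coef big_ord_recl; congr (_ * _).
  rewrite prod_ord_recl_cond ltnn mul1r lift_perm_id.
  rewrite (prod_take _ _ _ a) perm_word_size.
  rewrite (reindex_inj (@perm_inj _ (s^-1)%g)).
  apply: eq_big => [j|j _].
    by rewrite lift_perm_lift lift_ltk permKV.
  by rewrite perm_word_nth !(tnth_nth a).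
apply: eq_bigr => x _.
rewrite prod_ord_recl_cond ltn0 mul1r.
apply: eq_big => [b|b _].
  by rewrite !lift_perm_lift !lift_ltn.
by rewrite !(tnth_nth a).
Qed.

Lemma sum_perm_lift m (G : 'S_m.+1 -> F) :
  \sum_(s : 'S_m.+1) G s = \sum_(k : 'I_m.+1) \sum_(s0 : 'S_m) G (lift_perm ord0 k s0).
Proof.
rewrite (partition_big (fun s : 'S_m.+1 => s ord0) xpredT) //=.
apply: eq_bigr => j0 _.
set i0 : 'I_m.+1 := ord0.
rewrite (reindex (lift_perm i0 j0)); last first.
  pose ulsf i (s : 'S_m.+1) k := odflt k (unlift (s i) (s (lift i k))).
  have ulsfK i (s : 'S_m.+1) k: lift (s i) (ulsf i s k) = s (lift i k).
    rewrite /ulsf; have:= neq_lift i k.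
    by rewrite -(can_eq (permK s)) => /unlift_some[] ? ? ->.
  have inj_ulsf: injective (ulsf i0 _).
    move=> s; apply: can_inj (ulsf (s i0) s^-1%g) _ => k'.
    by rewrite {1}/ulsf ulsfK !permK liftK.
  exists (fun s => perm (inj_ulsf s)) => [s _ | s].
    by apply/permP=> k'; rewrite permE /ulsf lift_perm_lift lift_perm_id liftK.
  move/(s _ =P _) => si0; apply/permP=> k.
  case: (unliftP i0 k) => [k'|] ->; rewrite ?lift_perm_id //.
  by rewrite lift_perm_lift -si0 permE ulsfK.
by apply: eq_bigl => s; rewrite lift_perm_id eqxx.
Qed.

Fixpoint picks (a : 'I_n) (w : word n) : seq (F * word n) :=
  match w with
  | [::] => [::]
  | c :: w0 => (if c == a then [:: (1, w0)] else [::]) ++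
               [seq (q a c * p.1, c :: p.2) | p <- picks a w0]
  end.

Fixpoint fr (w w' : word n) : F :=
  match w with
  | [::] => (w' == [::])%:R
  | a :: w0 => \sum_(p <- picks a w') p.1 * fr w0 p.2
  end.

Lemma ins_picks a (l w' : word n) :
  \sum_(k < (size l).+1) ((insert_at k a l == w')%:R * \prod_(x <- take k l) q a x)
  = \sum_(p <- picks a w') ((p.2 == l)%:R * p.1).
Proof.
elim: l w' => [|c l IH] w'.
  rewrite big_ord_recl big_ord0 addr0 /insert_at /= big_nil mulr1.
  case: w' => [|d w''] /=; first by rewrite big_nil.
  rewrite big_cat big_map /= eqseq_cons.
  rewrite [X in _ + X]big1 ?addr0; last by move=> p _; rewrite mul0r.
  rewrite (eq_sym a d) (eq_sym [::] w'').
  by case: (d == a); rewrite ?big_cons ?big_nil ?addr0 ?mulr1.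
rewrite big_ord_recl /insert_at.
rewrite (_ : nat_of_ord (ord0 : 'I_(size (c::l)).+1) = 0%N) // take0 drop0 big_nil mulr1.
have -> : \sum_(i < size (c :: l))
     (take (lift ord0 i) (c :: l) ++ a :: drop (lift ord0 i) (c :: l) == w')%:R *
     \prod_(x <- take (lift ord0 i) (c :: l)) q a x
  = \sum_(k < (size l).+1) ((c :: insert_at k a l == w')%:R * (q a c * \prod_(x <- take k l) q a x)).
  by apply: eq_bigr => k _; rewrite lift0 /= big_cons.
case: w' => [|d w''].
  by rewrite /= big_nil big1 ?addr0 // => k _; rewrite mul0r.
rewrite /= big_cat big_map /=.
under eq_bigr => k _ do rewrite eqseq_cons.
have -> : \sum_(k < (size l).+1) (((c == d) && (insert_at k a l == w''))%:R * (q a c * \prod_(x <- take k l) q a x))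
  = (c == d)%:R * q a c * \sum_(k < (size l).+1) ((insert_at k a l == w'')%:R * \prod_(x <- take k l) q a x).
  rewrite big_distrr; apply: eq_bigr => k _ /=.
  by case: (c == d); rewrite /= ?mul1r ?mul0r // mulrCA.
rewrite IH big_distrr /= eqseq_cons.
congr (_ + _).
  rewrite (eq_sym a d) (eq_sym (c :: l) w'').
  by case: (d == a); rewrite ?big_cons ?big_nil ?addr0 ?mulr1.
apply: eq_bigr => p _ /=.
rewrite eqseq_cons (eq_sym d c).
by case: (c == d) / eqP => [->|]; rewrite /= ?mul1r ?mul0r // mulrCA mulrA.
Qed.



Lemma ins_picksN N a (l w' : word n) : size l = N ->
  \sum_(k < N.+1) ((insert_at k a l == w')%:R * \prod_(x <- take k l) q a x)
  = \sum_(p <- picks a w') ((p.2 == l)%:R * p.1).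
Proof. by move=> <-; exact: ins_picks. Qed.

Lemma tcoef_symm_wordE (w w' : word n) :
  tcoef (symm_word q w) w' = \sum_(s : 'S_(size w)) (perm_word s == w')%:R * perm_coef q s.
Proof.
rewrite /tcoef /symm_word big_map /= big_enum_cond /= big_mkcond /=.
by apply: eq_bigr => s _; rewrite in_setT /=; case: eqP; rewrite ?mul1r ?mul0r.
Qed.

Lemma tcoef_symm_word (w w' : word n) : tcoef (symm_word q w) w' = fr w w'.
Proof.
elim: w w' => [|a w IH] w'.
  rewrite tcoef_symm_wordE /=.
  rewrite (eq_bigr (fun _ => ([::] == w')%:R)); last first.
    move=> s _; rewrite /perm_coef big_ord0 mulr1.
    by have /size0nil -> := @perm_word_size [::] s.
  by rewrite sumr_const card_Sn /= eq_sym.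
rewrite tcoef_symm_wordE sum_perm_lift /=.
under eq_bigr => k _ do under eq_bigr => s0 _ do rewrite perm_word_lift perm_coef_lift.
rewrite exchange_big /=.
under eq_bigr => s0 _ do under eq_bigr => k _ do rewrite mulrA.
under eq_bigr => s0 _ do rewrite -big_distrl /=.
have E1 (s0 : 'S_(size w)) : \sum_(k < (size w).+1)
    (insert_at k a (perm_word s0) == w')%:R * \prod_(x <- take k (perm_word s0)) q a x
    = \sum_(p <- picks a w') ((p.2 == perm_word s0)%:R * p.1).
  by move: (ins_picksN a w' (perm_word_size s0)).
under eq_bigr => s0 _ do rewrite E1 big_distrl /=.
rewrite exchange_big /=.
apply: eq_bigr => p _.
rewrite -IH tcoef_symm_wordE big_distrr /=.
apply: eq_bigr => s0 _.
by rewrite eq_sym; case: eqP; rewrite ?mul1r ?mul0r ?mulr0 ?mulr1 // mulrC.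
Qed.

Lemma picks_mem a (w : word n) p : p \in picks a w ->
  exists s1 s2, w = s1 ++ a :: s2 /\ p.2 = s1 ++ s2.
Proof.
elim: w p => [|c w IH] p //=.
rewrite mem_cat => /orP[|].
  by case: eqP => [-> |] //; rewrite inE => /eqP ->; exists [::], w.
case/mapP => p' /IH [s1 [s2 [-> ->]]] ->; by exists (c :: s1), s2.
Qed.

Lemma sum_neq0_ex (I : eqType) (r : seq I) (G : I -> F) :
  \sum_(i <- r) G i != 0 -> exists2 i, i \in r & G i != 0.
Proof.
elim: r => [|x r IH]; first by rewrite big_nil eqxx.
rewrite big_cons; case: (eqVneq (G x) 0) => [->|]; last by exists x; rewrite ?inE ?eqxx.
rewrite add0r => /IH [i ir Gi]; exists i => //; by rewrite inE ir orbT.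
Qed.

Lemma fr_perm (w w' : word n) : fr w w' != 0 -> perm_eq w w'.
Proof.
elim: w w' => [|a w IH] w' /=.
  by case: w' => [|c w'] //=; rewrite eqxx.
move/sum_neq0_ex => [p /picks_mem [s1 [s2 [-> e2]]]].
rewrite mulf_eq0 negb_or => /andP[_ /IH]; rewrite e2 => h.
rewrite perm_sym; move: (perm_catCA s1 [:: a] s2) => /= ->; by rewrite perm_cons perm_sym.
Qed.

Lemma prod_seq_neq0 (I : Type) (r : seq I) (G : I -> F) :
  (forall i, G i != 0) -> \prod_(i <- r) G i != 0.
Proof.
move=> h; elim: r => [|x r IH]; first by rewrite big_nil oner_neq0.
by rewrite big_cons mulf_neq0.
Qed.

Section Fact.
Variable P : pred 'I_n.
Hypothesis qnz : forall i j, q i j != 0.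

Local Notation fU := (filter P).
Local Notation fV := (filter (predC P)).

Fixpoint kap (w : word n) : F :=
  match w with
  | [::] => 1
  | c :: w0 => if P c then kap w0 else kap w0 * \prod_(y <- fU w0) q y c
  end.

Lemma kap_neq0 w : kap w != 0.
Proof.
elim: w => [|c w IH] /=; first exact: oner_neq0.
by case: (P c) => //; rewrite mulf_neq0 // prod_seq_neq0.
Qed.

Lemma picksA a (w' : word n) : P a ->
  [seq (p.1 * kap p.2, fU p.2, fV p.2) | p <- picks a w'] =
  [seq (kap w' * p.1, p.2, fV w') | p <- picks a (fU w')].
Proof.
move=> Pa; elim: w' => [|c w IH] //=.
case Pc: (P c) => /=.
  rewrite !map_cat -!map_comp; congr (_ ++ _).
    by case: (c == a) => //=; rewrite mul1r mulr1.
  have := congr1 (map (fun t : F * word n * word n => (q a c * t.1.1, c :: t.1.2, t.2))) IH.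
  rewrite -!map_comp => h.
  rewrite (eq_map (g := (fun t : F * word n * word n => (q a c * t.1.1, c :: t.1.2, t.2))
     \o (fun p : F * word n => (p.1 * kap p.2, fU p.2, fV p.2)))); last first.
    by move=> p /=; rewrite Pc /= mulrA.
  rewrite h; apply: eq_map => p /=; by rewrite mulrCA.
have ca : (c == a) = false by apply/negbTE; apply/eqP => e; move: Pc; rewrite e Pa.
rewrite ca /= -map_comp.
have := congr1 (map (fun t : F * word n * word n =>
   (q a c * t.1.1 * \prod_(y <- t.1.2) q y c, t.1.2, c :: t.2))) IH.
rewrite -!map_comp => h.
rewrite (eq_map (g := (fun t : F * word n * word n =>
   (q a c * t.1.1 * \prod_(y <- t.1.2) q y c, t.1.2, c :: t.2))
     \o (fun p : F * word n => (p.1 * kap p.2, fU p.2, fV p.2)))); last first.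
  by move=> p /=; rewrite Pc /= !mulrA.
rewrite h; apply/eq_in_map => p /picks_mem [s1 [s2 [e1 e2]]] /=.
rewrite e1 e2 !big_cat big_cons /=.
congr (_, _, _); ring.
Qed.

Lemma picks_fU a (w : word n) p : ~~ P a -> p \in picks a w -> fU p.2 = fU w.
Proof.
move=> Pa /picks_mem [s1 [s2 [-> ->]]].
by rewrite !filter_cat /= (negbTE Pa).
Qed.

Lemma picksB a (w' : word n) : ~~ P a -> (forall y, y \in w' -> P y -> q y a * q a y = 1) ->
  [seq (p.1 * kap p.2 * \prod_(y <- fU w') q y a, fU p.2, fV p.2) | p <- picks a w'] =
  [seq (kap w' * p.1, fU w', p.2) | p <- picks a (fV w')].
Proof.
move=> Pa; elim: w' => [|c w IH] //= hyp.
have {}IH := IH (fun y yw => hyp y (mem_behead (s := c :: w) yw)).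
case Pc: (P c) => /=.
  have ca : (c == a) = false by apply/negbTE; apply/eqP => e; move: Pc; rewrite e (negbTE Pa).
  rewrite ca /= -map_comp.
  have := congr1 (map (fun t : F * word n * word n => (q a c * q c a * t.1.1, c :: t.1.2, t.2))) IH.
  rewrite -!map_comp => h.
  rewrite (eq_map (g := (fun t : F * word n * word n => (q a c * q c a * t.1.1, c :: t.1.2, t.2))
     \o (fun p : F * word n => (p.1 * kap p.2 * \prod_(y <- fU w) q y a, fU p.2, fV p.2)))); last first.
    by move=> p /=; rewrite Pc /= big_cons; congr (_, _, _); ring.
  rewrite h; apply: eq_map => p /=.
  have hc := hyp c (mem_head _ _) Pc.
  congr (_, _, _); by rewrite (mulrC (q a c)) hc mul1r.
rewrite !map_cat -!map_comp; congr (_ ++ _).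
  case: eqP => [ca|] //=; rewrite ca; congr [:: (_, _, _)]; ring.
have := congr1 (map (fun t : F * word n * word n =>
   (q a c * t.1.1 * \prod_(y <- fU w) q y c, t.1.2, c :: t.2))) IH.
rewrite -!map_comp => h.
rewrite (proj1 (eq_in_map _ ((fun t : F * word n * word n =>
   (q a c * t.1.1 * \prod_(y <- fU w) q y c, t.1.2, c :: t.2))
     \o (fun p : F * word n => (p.1 * kap p.2 * \prod_(y <- fU w) q y a, fU p.2, fV p.2))) (picks a w))); last first.
  by move=> p pin /=; rewrite Pc /= (picks_fU Pa pin); congr (_, _, _); ring.
rewrite h; apply: eq_map => p /=.
congr (_, _, _); ring.
Qed.

Lemma fact (w : word n) :
  (forall x y, x \in w -> y \in w -> P x -> ~~ P y -> q x y * q y x = 1) ->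
  forall w', fr w w' * kap w = kap w' * fr (fU w) (fU w') * fr (fV w) (fV w').
Proof.
elim: w => [|a w IH] hq w'.
  rewrite /= mulr1; case: w' => [|c w'] /=; first by rewrite !mulr1.
  by case: (P c) => /=; rewrite ?mulr0 ?mul0r.
have {}IH := IH (fun x y xw yw => hq x y (mem_behead (s := a :: w) xw) (mem_behead (s := a :: w) yw)).
case Pa: (P a) => /=; rewrite Pa /=.
  rewrite big_distrl.
  have e : \sum_(p <- picks a w') p.1 * fr w p.2 * kap w =
     \sum_(t <- [seq (p.1 * kap p.2, fU p.2, fV p.2) | p <- picks a w'])
        (t.1.1 * fr (fU w) t.1.2 * fr (fV w) t.2).
    rewrite big_map; apply: eq_bigr => p _ /=.
    by rewrite -mulrA IH; ring.
  rewrite e picksA // big_map big_distrr big_distrl /=.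
  by apply: eq_bigr => p _; ring.
case: (eqVneq (fr (fU w) (fU w')) 0) => [z|nz].
  rewrite z mulr0 mul0r big_distrl /=.
  rewrite big1_seq // => p /andP[_ pin].
  have : fr w p.2 * kap w = 0.
    by rewrite IH (picks_fU (negbT Pa) pin) z mulr0 mul0r.
  move/eqP; rewrite mulf_eq0 (negbTE (kap_neq0 w)) orbF => /eqP ->.
  by rewrite mulr0 mul0r.
have pe := fr_perm nz.
rewrite (perm_big _ pe) /=.
have hyp : forall y, y \in w' -> P y -> q y a * q a y = 1.
  move=> y yw Py; apply: hq => //; last by rewrite Pa.
    rewrite inE; apply/orP; right.
    by have := perm_mem pe y; rewrite !mem_filter Py yw /= => ->.
  by rewrite mem_head.
have e : \sum_(p <- picks a w') p.1 * fr w p.2 * (kap w * \prod_(y <- fU w') q y a) =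
     \sum_(t <- [seq (p.1 * kap p.2 * \prod_(y <- fU w') q y a, fU p.2, fV p.2) | p <- picks a w'])
        (t.1.1 * fr (fU w) t.1.2 * fr (fV w) t.2).
  rewrite big_map; apply: eq_bigr => p _ /=.
  rewrite mulrA -(mulrA p.1) IH; ring.
rewrite big_distrl /= e picksB ?Pa // big_map big_distrr /=.
by apply: eq_bigr => p _; ring.
Qed.

Definition Xc (w1 w2 : word n) : F := \prod_(x <- fV w1) \prod_(y <- fU w2) q y x.

Lemma kap_cat w1 w2 : kap (w1 ++ w2) = kap w1 * kap w2 * Xc w1 w2.
Proof.
rewrite /Xc; elim: w1 => [|c w1 IH] /=; first by rewrite big_nil mul1r mulr1.
case Pc: (P c) => /=; first by rewrite IH.
by rewrite IH big_cons filter_cat big_cat /=; ring.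
Qed.

Lemma Xc_perm w1 w2 s1 s2 : perm_eq w1 s1 -> perm_eq w2 s2 -> Xc w1 w2 = Xc s1 s2.
Proof.
move=> p1 p2; rewrite /Xc (perm_big _ (perm_filter _ p1)).
by apply: eq_bigr => x _; rewrite (perm_big _ (perm_filter _ p2)).
Qed.

Lemma Xc_neq0 w1 w2 : Xc w1 w2 != 0.
Proof. by apply: prod_seq_neq0 => x; apply: prod_seq_neq0. Qed.

Lemma kap_allP w : all P w -> kap w = 1.
Proof. by elim: w => [|c w IH] //= /andP[-> /IH]. Qed.

Lemma kap_allN w : all (predC P) w -> kap w = 1.
Proof.
elim: w => [|c w IH] //= /andP[Pc aw]; rewrite (negbTE Pc) IH //.
have -> : fU w = [::].
  by apply/eqP; rewrite -[_ == _]negbK -has_filter -all_predC.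
by rewrite big_nil mulr1.
Qed.

Definition Zero (t : tens F n) : Prop :=
  forall h : word n -> word n -> F,
    \sum_(p <- t) p.1 / kap p.2 * h (fU p.2) (fV p.2) = 0.

Definition hom (t : tens F n) (s : word n) := forall p, p \in t -> perm_eq p.2 s.

Lemma Zero_add t1 t2 : Zero t1 -> Zero t2 -> Zero (tadd t1 t2).
Proof. by move=> z1 z2 h; rewrite /tadd big_cat /= z1 z2 addr0. Qed.

Lemma Zero_scale c t : Zero t -> Zero (tscale c t).
Proof.
move=> z h; rewrite /tscale big_map /=.
rewrite (_ : \sum_(i <- t) _ = c * \sum_(p <- t) p.1 / kap p.2 * h (fU p.2) (fV p.2)).
  by rewrite z mulr0.
rewrite big_distrr; apply: eq_bigr => p _ /=; ring.
Qed.

Lemma Zero_mul t1 t2 s1 s2 : hom t1 s1 -> hom t2 s2 ->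
  (Zero t1 -> Zero (tmul t1 t2)) /\ (Zero t2 -> Zero (tmul t1 t2)).
Proof.
move=> h1 h2; have E : forall h, \sum_(p <- tmul t1 t2) p.1 / kap p.2 * h (fU p.2) (fV p.2)
  = \sum_(a <- t1) \sum_(b <- t2) (a.1 / kap a.2) * (b.1 / kap b.2) / Xc s1 s2 *
        h (fU a.2 ++ fU b.2) (fV a.2 ++ fV b.2).
  move=> h; rewrite /tmul big_allpairs_dep /=.
  apply: eq_big_seq => a ain; apply: eq_big_seq => b bin /=.
  rewrite kap_cat (Xc_perm (h1 _ ain) (h2 _ bin)) !filter_cat !invfM; ring.
split=> z h; rewrite E.
  rewrite exchange_big /= big1 // => b _.
  apply: etrans (z (fun x y => b.1 / kap b.2 / Xc s1 s2 * h (x ++ fU b.2) (y ++ fV b.2))).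
  apply: eq_bigr => a _; ring.
rewrite big1 // => a _.
apply: etrans (z (fun x y => a.1 / kap a.2 / Xc s1 s2 * h (fU a.2 ++ x) (fV a.2 ++ y))).
apply: eq_bigr => b _; ring.
Qed.

End Fact.

Lemma tcoef_symm (t : tens F n) w' : tcoef (symm q t) w' = \sum_(p <- t) p.1 * fr p.2 w'.
Proof.
rewrite /tcoef /symm big_flatten big_map /=; apply: eq_bigr => p _.
by rewrite /tscale big_map /= -big_distrr /= -tcoef_symm_word.
Qed.

Lemma nz_word w : nichols_zero q (tword F w) <-> forall w', fr w w' = 0.
Proof.
rewrite /nichols_zero /tzero; split=> h w'; have := h w';
by rewrite tcoef_symm big_cons big_nil addr0 mul1r.
Qed.

Lemma beval_hom tr p : p \in beval q tr -> perm_eq p.2 (bletters tr).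
Proof.
elim: tr p => [i|x IHx y IHy] p /=; first by rewrite inE => /eqP ->.
rewrite /tadd mem_cat => /orP[].
  case/allpairsP => [[b a] [/= bin ain ->]] /=.
  by rewrite perm_catC perm_cat // ?IHx ?IHy.
rewrite /tscale => /mapP [p' /allpairsP [[a b] [/= ain bin ->]] ->] /=.
by rewrite perm_cat // ?IHx ?IHy.
Qed.

Lemma node_sum (P : pred 'I_n) x y (h : word n -> word n -> F) :
  \sum_(p <- beval q (BNode x y)) p.1 / kap P p.2 * h (filter P p.2) (filter (predC P) p.2) =
  \sum_(b <- beval q y) \sum_(a <- beval q x)
     (b.1 * a.1 / kap P (b.2 ++ a.2) * h (filter P (b.2 ++ a.2)) (filter (predC P) (b.2 ++ a.2))
      - chi q (bletters y) (bletters x) * (a.1 * b.1) / kap P (a.2 ++ b.2) *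
        h (filter P (a.2 ++ b.2)) (filter (predC P) (a.2 ++ b.2))).
Proof.
rewrite /= /tadd big_cat /tscale big_map /tmul !big_allpairs_dep /=.
rewrite [X in _ + X]exchange_big /= -big_split; apply: eq_bigr => b _ /=.
rewrite -big_split; apply: eq_bigr => a _ /=; ring.
Qed.

Lemma filter_allN (P : pred 'I_n) (s : word n) : all (predC P) s -> filter P s = [::].
Proof. by move=> h; apply/eqP; rewrite -[_ == _]negbK -has_filter -all_predC. Qed.

Section Main.
Variables (u v : word n).
Hypothesis qnz : forall i j, q i j != 0.
Hypothesis u_ne : u != [::].
Hypothesis v_ne : v != [::].
Hypothesis disj : forall i, i \in u -> i \notin v.
Hypothesis hq : forall i j, i \in u -> j \in v -> q i j * q j i = 1.

Definition Pu : pred 'I_n := fun i => i \in u.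
Local Notation fU := (filter Pu).
Local Notation fV := (filter (predC Pu)).

Lemma hqUV x y : x \in u ++ v -> y \in u ++ v -> Pu x -> ~~ Pu y -> q x y * q y x = 1.
Proof.
rewrite !mem_cat /Pu => _ /orP[->//|yv] xu _; exact: hq.
Qed.

Lemma allPu : all Pu u. Proof. by apply/allP. Qed.
Lemma allNv : all (predC Pu) v.
Proof. by apply/allP => y yv /=; apply/negP => /disj; rewrite yv. Qed.

Lemma kap_uv : kap Pu (u ++ v) = 1.
Proof.
rewrite kap_cat kap_allP ?allPu // kap_allN ?allNv // /Xc filter_allN ?big_nil ?mulr1 //.
by rewrite all_predC has_predC negbK allPu.
Qed.

Lemma fr_uv w' : fr (u ++ v) w' = kap Pu w' * fr u (fU w') * fr v (fV w').
Proof.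
have := fact qnz (@hqUV) w'; rewrite kap_uv mulr1 => ->.
rewrite !filter_cat (all_filterP allPu) (filter_allN allNv) cats0.
rewrite (filter_allN (P := predC Pu) (s := u)) ?(all_filterP allNv) //.
by rewrite all_predC has_predC negbK allPu.
Qed.

Lemma filterC_allP (P : pred 'I_n) (s : word n) : all P s -> filter (predC P) s = [::].
Proof.
move=> h; apply: filter_allN; rewrite (eq_all (a2 := P)) // => z /=; exact: negbK.
Qed.

Lemma chi_neq0 s1 s2 : chi q s1 s2 != 0.
Proof. by apply: prod_seq_neq0 => x; apply: prod_seq_neq0. Qed.


Lemma Z_tree tr : all (fun i => i \in u ++ v) (bletters tr) ->
  has Pu (bletters tr) -> has (predC Pu) (bletters tr) -> Zero Pu (beval q tr).
Proof.
elim: tr => [i|x IHx y IHy] /=.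
  by rewrite !orbF => _ Pi; rewrite /= Pi.
rewrite all_cat has_cat has_cat => /andP[ax ay] hP hN.
have hx := @beval_hom x; have hy := @beval_hom y.
case hxm: (has Pu (bletters x) && has (predC Pu) (bletters x)).
  case/andP: hxm => h1 h2; have zx := IHx ax h1 h2.
  apply: Zero_add.
    by apply: (proj2 (Zero_mul Pu hy hx)).
  by apply: Zero_scale; apply: (proj1 (Zero_mul Pu hx hy)).
case hym: (has Pu (bletters y) && has (predC Pu) (bletters y)).
  case/andP: hym => h1 h2; have zy := IHy ay h1 h2.
  apply: Zero_add.
    by apply: (proj1 (Zero_mul Pu hy hx)).
  by apply: Zero_scale; apply: (proj2 (Zero_mul Pu hx hy)).
have cx : all (predC Pu) (bletters x) \/ all Pu (bletters x).
  move/negbT: hxm; rewrite negb_and -all_predC has_predC negbK.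
  by case/orP => h; [left|right].
have cy : all (predC Pu) (bletters y) \/ all Pu (bletters y).
  move/negbT: hym; rewrite negb_and -all_predC has_predC negbK.
  by case/orP => h; [left|right].
have inv_of (X c : F) : X * c = 1 -> X^-1 = c.
  move=> e; have Xn : X != 0 by apply/eqP => X0; move: e; rewrite X0 mul0r => /eqP; rewrite eq_sym oner_eq0.
  by rewrite -[X^-1]mulr1 -e mulrA mulVf ?mul1r.
case: cx => [xN|xP]; case: cy => [yN|yP].
- by move: hP; rewrite -[has Pu (bletters x)]negbK -all_predC xN -[has Pu (bletters y)]negbK -all_predC yN.
- move=> h; rewrite node_sum; apply: big1_seq => b /andP[_ bin]; apply: big1_seq => a /andP[_ ain].
  have pa := hx a ain; have pb := hy b bin.
  have aN : all (predC Pu) a.2 by rewrite (perm_all _ pa).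
  have bP : all Pu b.2 by rewrite (perm_all _ pb).
  rewrite !filter_cat (all_filterP aN) (all_filterP bP) (filter_allN aN) (filterC_allP bP) !cats0 !cat0s.
  rewrite !kap_cat (kap_allP bP) (kap_allN aN) !mul1r.
  rewrite {1}/Xc (filterC_allP bP) big_nil (Xc_perm Pu pa pb).
  have -> : Xc Pu (bletters x) (bletters y) = chi q (bletters y) (bletters x).
    rewrite /Xc (all_filterP xN) (all_filterP yP) /chi exchange_big //.
  have cn := chi_neq0 (bletters y) (bletters x).
  rewrite invr1 mulr1 [chi _ _ _ * _ / _]mulrAC mulfV // mul1r; ring.
- move=> h; rewrite node_sum; apply: big1_seq => b /andP[_ bin]; apply: big1_seq => a /andP[_ ain].
  have pa := hx a ain; have pb := hy b bin.
  have aP : all Pu a.2 by rewrite (perm_all _ pa).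
  have bN : all (predC Pu) b.2 by rewrite (perm_all _ pb).
  rewrite !filter_cat (all_filterP aP) (all_filterP bN) (filter_allN bN) (filterC_allP aP) !cats0 !cat0s.
  rewrite !kap_cat (kap_allP aP) (kap_allN bN) !mul1r.
  rewrite [Xc Pu a.2 b.2]/Xc (filterC_allP aP) big_nil (Xc_perm Pu pb pa).
  have -> : (Xc Pu (bletters y) (bletters x))^-1 = chi q (bletters y) (bletters x).
    apply: inv_of.
    rewrite /Xc (all_filterP xP) (all_filterP yN) /chi -big_split /=.
    apply: big1_seq => z /andP[_ zin]; rewrite -big_split /=.
    apply: big1_seq => t /andP[_ tin].
    have tu : t \in u by have := allP xP t tin.
    have zv : z \in v.
      have := allP ay z zin; rewrite mem_cat => /orP[zu|//].
      by have := allP yN z zin; rewrite /= /Pu zu.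
    exact: hq.
  rewrite invr1 mulr1; ring.
- by move: hN; rewrite has_predC has_predC xP yP.
Qed.

Lemma T0 tr w' : perm_eq (u ++ v) w' -> \sum_(p <- beval q tr) p.1 * fr p.2 w' = 0.
Proof.
move=> pw; case: (boolP (perm_eq (bletters tr) w')) => [pt|npt]; last first.
  apply: big1_seq => p /andP[_ pin].
  case: (eqVneq (fr p.2 w') 0) => [->|nz]; first by rewrite mulr0.
  have h1 : perm_eq (bletters tr) p.2 by rewrite perm_sym (beval_hom pin).
  by move: npt; rewrite (@perm_trans _ p.2 _ _ h1 (fr_perm nz)).
have ptu : perm_eq (bletters tr) (u ++ v) by apply: (@perm_trans _ w' _ _ pt); rewrite perm_sym.
have [x xu] : exists x, x \in u by case: (u) u_ne => [|x s] //; exists x; rewrite mem_head.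
have [y yv] : exists y, y \in v by case: (v) v_ne => [|y s] //; exists y; rewrite mem_head.
have z := @Z_tree tr.
have z' : Zero Pu (beval q tr).
  apply: z.
  - by apply/allP => i; rewrite (perm_mem ptu).
  - by apply/hasP; exists x => //; rewrite (perm_mem ptu) mem_cat xu.
  - apply/hasP; exists y; first by rewrite (perm_mem ptu) mem_cat yv orbT.
    by rewrite /= /Pu; apply/negP => yu; move: (disj yu); rewrite yv.
have e : \sum_(p <- beval q tr) p.1 * fr p.2 w' =
   \sum_(p <- beval q tr) p.1 / kap Pu p.2 * (kap Pu w' * fr (fU p.2) (fU w') * fr (fV p.2) (fV w')).
  apply: eq_big_seq => p pin.
  have hyp : forall x y, x \in p.2 -> y \in p.2 -> Pu x -> ~~ Pu y -> q x y * q y x = 1.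
    move=> x1 y1 x1p y1p; apply: hqUV; by rewrite -(perm_mem ptu) -(perm_mem (beval_hom pin)).
  by rewrite -(fact qnz hyp w') [fr _ _ * _]mulrC mulrA divfK // kap_neq0.
rewrite e; exact: (z' (fun a b => kap Pu w' * fr a (fU w') * fr b (fV w'))).
Qed.

Lemma ex_nz w : ~ nichols_zero q (tword F w) -> exists a, fr w a != 0.
Proof.
rewrite nz_word => h; have [a ha] := not_all_ex_not _ _ h.
by exists a; apply/eqP.
Qed.

Theorem main_thm :
  ((~ nichols_zero q (tword F u) /\ ~ nichols_zero q (tword F v)) <->
     ~ nichols_zero q (tword F (u ++ v)))
  /\ (~ nichols_zero q (tword F (u ++ v)) <-> ~ in_L q (tword F (u ++ v))).
Proof.
split; split.
- case=> /ex_nz [a ha] /ex_nz [b hb] /nz_word /(_ (a ++ b)).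
  have aP : all Pu a by rewrite -(perm_all _ (fr_perm ha)) allPu.
  have bN : all (predC Pu) b by rewrite -(perm_all _ (fr_perm hb)) allNv.
  rewrite fr_uv !filter_cat (all_filterP aP) (all_filterP bN) (filter_allN bN) (filterC_allP aP) cats0 /=.
  by move/eqP; rewrite !mulf_eq0 (negbTE (kap_neq0 Pu qnz _)) (negbTE ha) (negbTE hb).
- move=> nuv; split => nz; apply: nuv; apply/nz_word => w'; rewrite fr_uv.
    by rewrite (proj1 (nz_word _) nz) mulr0 mul0r.
  by rewrite (proj1 (nz_word _) nz) mulr0.
- move=> nuv [cs hcs]; apply: nuv; apply/nz_word => w'.
  case: (boolP (perm_eq (u ++ v) w')) => [pw|npw]; last first.
    by apply/eqP; apply: (contraNT (@fr_perm _ _)) npw.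
  have := hcs w'; rewrite tcoef_symm /tadd big_cat /= big_cons big_nil /= addr0 mul1r.
  rewrite big_flatten big_map /= big1 ?addr0 // => c _.
  rewrite /tscale big_map /=.
  rewrite (_ : \sum_(i <- beval q c.2) _ = - c.1 * \sum_(p <- beval q c.2) p.1 * fr p.2 w').
    by rewrite T0 // mulr0.
  by rewrite big_distrr; apply: eq_bigr => p _ /=; ring.
- move=> nL nz; apply: nL; exists [::].
  by rewrite /tadd /=.
Qed.

End Main.

End Dev.

Unset Implicit Arguments.
Set Strict Implicit.

Theorem corollary5p2 (F : closedFieldType) (n : nat) (q : 'I_n -> 'I_n -> F)
  (charF0 : [pchar F] =i pred0)
  (qnz : forall i j, q i j != 0)
  (u v : seq 'I_n) (u_ne : u != [::]) (v_ne : v != [::])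
  (disj : forall i, i \in u -> i \notin v)
  (hq : forall i j, i \in u -> j \in v -> q i j * q j i = 1) :
  ((~ nichols_zero q (tword F u) /\ ~ nichols_zero q (tword F v)) <->
     ~ nichols_zero q (tword F (u ++ v)))
  /\ (~ nichols_zero q (tword F (u ++ v)) <-> ~ in_L q (tword F (u ++ v))).
Proof. exact: (main_thm qnz u_ne v_ne disj hq). Qed.
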